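(* For every $k\ge1$, the transfinite lower central subgroup $(\Gamma_{2k-1})_\omega$ equals the cyclic subgroup of order $(2k-1)^2$ generated by $[x,y]$, and $(\Gamma_{2k-1})_{\omega+1}$ is trivial. Consequently, for $\widehat\Gamma=\varinjlim_k\Gamma_{2k-1}$, $\widehat\Gamma_\omega$ is the central subgroup $\mathbb{Z}_{(2)}/\mathbb{Z}$ and $\widehat\Gamma_{\omega+1}$ is trivial.
   Context: $\Gamma_{2k-1}=\langle x,y,t\mid [x,y]^{(2k-1)^2},\ [[x,y],t],\ [[x,y],x],\ [[x,y],y],\ txt^{-1}=x^{-1},\ tyt^{-1}=y^{-1}\rangle$. For $(2k-1)\mid(2\ell-1)$, $\Gamma_{2k-1}\to\Gamma_{2\ell-1}$ is $t\mapsto t$, $x\mapsto x^{(2\ell-1)/(2k-1)}$, $y\mapsto y^{(2\ell-1)/(2k-1)}$, and $\widehat\Gamma$ is the colimit (it is the homology localization of $\Gamma=\Gamma_1$). In $\Gamma_{2k-1}$, $[x,y]$ generates a central subgroup identified with $(\frac1{(2k-1)^2}\mathbb{Z})/\mathbb{Z}$ via $[x,y]\mapsto\frac{1}{(2k-1)^2}$; in the colimit these give a central subgroup identified with $\mathbb{Z}_{(2)}/\mathbb{Z}$, $\mathbb{Z}_{(2)}=\{a/b\in\mathbb{Q}:b\text{ odd}\}$. Lower central series: $\pi_1=\pi$, $\pi_{\alpha}=[\pi,\pi_{\alpha-1}]$ for successor ordinals, $\pi_\alpha=\bigcap_{\beta<\alpha}\pi_\beta$ for limit ordinals. *)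

(* Defs.v *)
From mathcomp Require Import all_boot all_order all_algebra.
Set Implicit Arguments. Unset Strict Implicit. Unset Printing Implicit Defensive.
Import Order.TTheory GRing.Theory Num.Theory.

Record group := Group {
  gcar :> Type;
  gmul : gcar -> gcar -> gcar;
  ginv : gcar -> gcar;
  gone : gcar;
  gmulA : forall a b c, gmul a (gmul b c) = gmul (gmul a b) c;
  gmul1 : forall a, gmul gone a = a;
  gmulV : forall a, gmul (ginv a) a = gone }.
Arguments gmul {g} _ _.
Arguments ginv {g} _.
Arguments gone {g}.

Section Ops.
Variable G : group.

Fixpoint gpown (a : G) (n : nat) : G :=
  match n with O => gone | S m => gmul a (gpown a m) end.
Definition gpowz (a : G) (j : int) : G :=
  match j with Posz n => gpown a n | Negz n => ginv (gpown a n.+1) end.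

Definition comm (a b : G) : G := gmul a (gmul b (gmul (ginv a) (ginv b))).

Definition is_subgroup (H : G -> Prop) : Prop :=
  H gone /\ (forall a b, H a -> H b -> H (gmul a b)) /\ (forall a, H a -> H (ginv a)).

Definition gen (S : G -> Prop) : G -> Prop :=
  fun g => forall H, is_subgroup H -> (forall s, S s -> H s) -> H g.

Definition commg (A B : G -> Prop) : G -> Prop :=
  gen (fun g => exists a b, A a /\ B b /\ g = comm a b).

(* lower central series: lcs 0 = pi_1 = G, lcs n = pi_{n+1} = [G, pi_n] *)
Fixpoint lcs (n : nat) : G -> Prop :=
  match n with
  | O => fun _ => True
  | S m => commg (fun _ => True) (lcs m)
  end.

Definition lcs_omega : G -> Prop := fun g => forall n, lcs n g.
Definition lcs_omega1 : G -> Prop := commg (fun _ => True) lcs_omega.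
End Ops.

Definition is_hom (G K : group) (f : G -> K) : Prop :=
  forall a b, f (gmul a b) = gmul (f a) (f b).

Definition gamma_rels (G : group) (n : nat) (x y t : G) : Prop :=
  let z := comm x y in
  gpown z (n ^ 2) = gone /\
  comm z t = gone /\
  comm z x = gone /\
  comm z y = gone /\
  gmul t (gmul x (ginv t)) = ginv x /\
  gmul t (gmul y (ginv t)) = ginv y.

(* G is presented by <x,y,t | relations of Gamma_n>, via the universal property:
   the relations hold, and for every group K and x',y',t' in K satisfying the
   relations there is a unique homomorphism G -> K sending x,y,t to x',y',t'. *)
Definition presents_gamma (G : group) (n : nat) (x y t : G) : Prop :=
  gamma_rels n x y t /\
  forall (K : group) (x' y' t' : K), gamma_rels n x' y' t' ->
    exists f : G -> K, [/\ is_hom f, f x = x', f y = y', f t = t' &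
      forall f' : G -> K, is_hom f' -> f' x = x' -> f' y = y' -> f' t = t' ->
        forall g, f' g = f g].

Definition is_colimit (Gam : nat -> group)
    (phi : forall m n, Gam m -> Gam n) (C : group) (iota : forall n, Gam n -> C) : Prop :=
  (forall n, odd n -> is_hom (iota n)) /\
  (forall m n, odd m -> odd n -> (m %| n)%N -> forall g, iota n (phi m n g) = iota m g) /\
  forall (K : group) (f : forall n, Gam n -> K),
    (forall n, odd n -> is_hom (f n)) ->
    (forall m n, odd m -> odd n -> (m %| n)%N -> forall g, f n (phi m n g) = f m g) ->
    exists h : C -> K, [/\ is_hom h,
      (forall n, odd n -> forall g, h (iota n g) = f n g) &
      forall h' : C -> K, is_hom h' ->
        (forall n, odd n -> forall g, h' (iota n g) = f n g) -> forall c, h' c = h c].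

(* Z_(2)/Z represented by the rationals q with 0 <= q < 1 and odd denominator *)
Definition in_Z2modZ (q : rat) : Prop :=
  (0 <= q)%R /\ (q < 1)%R /\ odd (absz (denq q)).

Definition fracQ (q : rat) : rat := (q - (Num.floor q)%:~R)%R.

Arguments lcs_omega G _ : clear implicits.
Arguments lcs_omega1 G _ : clear implicits.
Arguments lcs G n _ : clear implicits.

(* Main.v *)
Require Import Defs.
From mathcomp Require Import all_boot all_order all_algebra.
From mathcomp Require Import ring lra zify.
From Stdlib Require Import ProofIrrelevance ClassicalEpsilon.

Module Aux.
Set Implicit Arguments. Unset Strict Implicit. Unset Printing Implicit Defensive.
Import Order.TTheory GRing.Theory Num.Theory.
Local Open Scope ring_scope.

Section GroupBasics.
Variable G : group.
Implicit Types a b c u w : G.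

Lemma gmulVr a : gmul a (ginv a) = gone.
Proof.
rewrite -[LHS]gmul1 -{1}(gmulV (ginv a)) -gmulA.
by rewrite (gmulA (ginv a) a) gmulV gmul1 gmulV.
Qed.

Lemma gmul1r a : gmul a gone = a.
Proof. by rewrite -(gmulV a) gmulA gmulVr gmul1. Qed.

Lemma gmulKl a b : gmul (ginv a) (gmul a b) = b.
Proof. by rewrite gmulA gmulV gmul1. Qed.

Lemma gmulKr a b : gmul a (gmul (ginv a) b) = b.
Proof. by rewrite gmulA gmulVr gmul1. Qed.

Lemma gmulI a b c : gmul a b = gmul a c -> b = c.
Proof. by move=> h; rewrite -(gmulKl a b) h gmulKl. Qed.

Lemma ginv_uniq a b : gmul a b = gone -> ginv a = b.
Proof. by move=> h; apply: (@gmulI a); rewrite gmulVr h. Qed.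

Lemma ginvK a : ginv (ginv a) = a.
Proof. by apply: ginv_uniq; rewrite gmulV. Qed.

Lemma ginvM a b : ginv (gmul a b) = gmul (ginv b) (ginv a).
Proof. by apply: ginv_uniq; rewrite -gmulA (gmulA b) gmulVr gmul1 gmulVr. Qed.

Lemma ginv1 : ginv (@gone G) = gone.
Proof. by apply: ginv_uniq; rewrite gmul1. Qed.

Lemma gmulIr a b c : gmul b a = gmul c a -> b = c.
Proof.
move=> h; by rewrite -(gmul1r b) -(gmulVr a) gmulA h -gmulA gmulVr gmul1r.
Qed.

Lemma gpownS a n : gpown a n.+1 = gmul a (gpown a n). Proof. by []. Qed.

Lemma gpown_comm a n : gmul a (gpown a n) = gmul (gpown a n) a.
Proof.
elim: n => [|n IH]; first by rewrite /= gmul1 gmul1r.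
by rewrite gpownS {1}IH !gmulA IH.
Qed.

Lemma gpownSr a n : gpown a n.+1 = gmul (gpown a n) a.
Proof. by rewrite gpownS gpown_comm. Qed.

Lemma gpowz_nat a (n : nat) : gpowz a n = gpown a n. Proof. by []. Qed.

Lemma gpowz0 a : gpowz a 0 = gone. Proof. by []. Qed.
Lemma gpowz1 a : gpowz a 1 = a. Proof. by rewrite /= gmul1r. Qed.
Lemma gpowzN1 a : gpowz a (-1) = ginv a. Proof. by rewrite /= gmul1r. Qed.

Lemma gpowzS a (i : int) : gpowz a (i + 1) = gmul (gpowz a i) a.
Proof.
case: i => n.
  have -> : (Posz n + 1 = Posz n.+1)%R by lia.
  exact: gpownSr.
case: n => [|n].
  have -> : (Negz 0 + 1 = 0)%R by lia.
  by rewrite /= gmul1r gmulV.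
have -> : (Negz n.+1 + 1 = Negz n)%R by lia.
change (ginv (gpown a n.+1) = gmul (ginv (gpown a n.+2)) a).
by rewrite (gpownS a n.+1) ginvM -gmulA gmulV gmul1r.
Qed.

Lemma gpowzP a (i : int) : gpowz a (i - 1) = gmul (gpowz a i) (ginv a).
Proof.
by rewrite -{2}(subrK 1 i) gpowzS -gmulA gmulVr gmul1r.
Qed.

Lemma int_ind3 (P : int -> Prop) : P 0 -> (forall i, P i -> P (i + 1)) ->
  (forall i, P i -> P (i - 1)) -> forall i, P i.
Proof.
move=> P0 PS PP; case=> n.
  elim: n => [//|n IH]; have := PS _ IH; have -> : (Posz n + 1 = Posz n.+1)%R by lia. by [].
elim: n => [|n IH]; first by have := PP _ P0.
have := PP _ IH; have -> : (Negz n - 1 = Negz n.+1)%R by lia. by [].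
Qed.

Lemma gpowzD a (i j : int) : gpowz a (i + j) = gmul (gpowz a i) (gpowz a j).
Proof.
elim/int_ind3: j => [|j IH|j IH]; first by rewrite addr0 gmul1r.
  by rewrite addrA !gpowzS IH gmulA.
by rewrite addrA !gpowzP IH gmulA.
Qed.

Lemma gpowzN a (i : int) : gpowz a (- i) = ginv (gpowz a i).
Proof.
symmetry; apply: ginv_uniq; by rewrite -gpowzD subrr.
Qed.

Lemma gpowzM a (i j : int) : gpowz a (i * j) = gpowz (gpowz a i) j.
Proof.
elim/int_ind3: j => [|j IH|j IH]; first by rewrite mulr0.
  by rewrite mulrDr mulr1 gpowzS -IH gpowzD.
by rewrite mulrBr mulr1 gpowzP -IH gpowzD gpowzN.
Qed.

Lemma gpowz_comm a b (i : int) : gmul a b = gmul b a ->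
  gmul (gpowz a i) b = gmul b (gpowz a i).
Proof.
move=> h; elim/int_ind3: i => [|i IH|i IH]; first by rewrite gmul1 gmul1r.
  by rewrite gpowzS -gmulA h gmulA IH gmulA.
rewrite gpowzP -gmulA.
have h' : gmul (ginv a) b = gmul b (ginv a).
  apply: (@gmulI a); rewrite gmulKr gmulA h -gmulA gmulVr gmul1r //.
by rewrite h' gmulA IH gmulA.
Qed.

Lemma gpowz_comm2 a b (i j : int) : gmul a b = gmul b a ->
  gmul (gpowz a i) (gpowz b j) = gmul (gpowz b j) (gpowz a i).
Proof.
move=> h; apply: gpowz_comm; symmetry; apply: gpowz_comm; done.
Qed.

Lemma gcommV a b : gmul a b = gmul b a -> gmul (ginv a) b = gmul b (ginv a).
Proof.
move=> h; apply: (@gmulI a); rewrite gmulKr gmulA h -gmulA gmulVr gmul1r //.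
Qed.

Lemma gpowz_mulc a b (i : int) : gmul a b = gmul b a ->
  gpowz (gmul a b) i = gmul (gpowz a i) (gpowz b i).
Proof.
move=> h; elim/int_ind3: i => [|i IH|i IH]; first by rewrite gmul1.
  rewrite !gpowzS IH -!gmulA; congr gmul.
  by rewrite gmulA (gpowz_comm _ (esym h)) -gmulA.
rewrite !gpowzP IH ginvM -!gmulA; congr gmul.
have h' : gmul b (ginv a) = gmul (ginv a) b by rewrite (gcommV h).
have h'' : gmul (ginv b) (ginv a) = gmul (ginv a) (ginv b) by rewrite -!ginvM h.
by rewrite h'' gmulA (gpowz_comm _ h') -gmulA.
Qed.

Lemma gpowz_one (i : int) : gpowz (@gone G) i = gone.
Proof.
elim/int_ind3: i => [|i IH|i IH] //; first by rewrite gpowzS IH gmul1.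
by rewrite gpowzP IH gmul1 ginv1.
Qed.

End GroupBasics.

Section Homs.
Variables G K : group.
Variable f : G -> K.
Hypothesis hf : is_hom f.

Lemma hom1 : f gone = gone.
Proof.
apply: (@gmulI _ (f gone)); by rewrite -hf gmul1 gmul1r.
Qed.

Lemma homV a : f (ginv a) = ginv (f a).
Proof. symmetry; apply: ginv_uniq; by rewrite -hf gmulVr hom1. Qed.

Lemma hom_powz a (i : int) : f (gpowz a i) = gpowz (f a) i.
Proof.
elim/int_ind3: i => [|i IH|i IH]; first exact: hom1.
  by rewrite !gpowzS hf IH.
by rewrite !gpowzP hf IH homV.
Qed.

Lemma hom_comm a b : f (comm a b) = comm (f a) (f b).
Proof. by rewrite /comm !hf !homV. Qed.
End Homs.

Lemma hom_comp (G K L : group) (f : G -> K) (g : K -> L) :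
  is_hom f -> is_hom g -> is_hom (fun x => g (f x)).
Proof. by move=> hf hg a b; rewrite hf hg. Qed.

Lemma hom_id (G : group) : is_hom (fun x : G => x).
Proof. by []. Qed.

Lemma comm1P (G : group) (a b : G) : comm a b = gone <-> gmul a b = gmul b a.
Proof.
rewrite /comm; split=> h.
  have e : gmul (gmul a (gmul b (gmul (ginv a) (ginv b)))) (gmul b a) = gmul b a
    by rewrite h gmul1.
  by rewrite -e -!gmulA (gmulKl b) gmulV gmul1r.
by rewrite !gmulA h -(gmulA b) gmulVr gmul1r gmulVr.
Qed.

Section Subgroups.
Variable G : group.

Lemma sub_powz (H : G -> Prop) a (i : int) : is_subgroup H -> H a -> H (gpowz a i).
Proof.
move=> [h1 [hm hi]] ha; elim/int_ind3: i => [|i IH|i IH] //.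
  by rewrite gpowzS; apply: hm.
by rewrite gpowzP; apply: hm => //; apply: hi.
Qed.

Lemma gen_sub (S : G -> Prop) : is_subgroup (gen S).
Proof.
split; first by move=> H [].
split; first by move=> a b ha hb H hH hS; case: (hH) => _ [hm _]; apply: hm; [apply: ha|apply: hb].
by move=> a ha H hH hS; case: (hH) => _ [_ hi]; apply: hi; apply: ha.
Qed.

Lemma gen_in (S : G -> Prop) s : S s -> gen S s.
Proof. by move=> hs H _ hS; apply: hS. Qed.

Lemma lcs_sub n : is_subgroup (lcs G n).
Proof.
case: n => [|n] /=; last exact: gen_sub.
by split=> //.
Qed.

Lemma lcs_omega_sub : is_subgroup (lcs_omega G).
Proof.
split; first by move=> n; case: (lcs_sub n).
split; first by move=> a b ha hb n; case: (lcs_sub n) => _ [hm _]; apply: hm.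
by move=> a ha n; case: (lcs_sub n) => _ [_ hi]; apply: hi.
Qed.
End Subgroups.

Lemma preim_sub (G K : group) (f : G -> K) (H : K -> Prop) :
  is_hom f -> is_subgroup H -> is_subgroup (fun g => H (f g)).
Proof.
move=> hf [h1 [hm hi]]; split; first by rewrite hom1.
split; first by move=> a b ha hb; rewrite hf; apply: hm.
by move=> a ha; rewrite homV //; apply: hi.
Qed.

Lemma hom_lcs (G K : group) (f : G -> K) n g :
  is_hom f -> lcs G n g -> lcs K n (f g).
Proof.
move=> hf; elim: n g => [//|n IH] g /= hg.
apply: (hg (fun g => lcs K n.+1 (f g))); first by apply: preim_sub => //; apply: (lcs_sub K n.+1).
move=> s [a [b [_ [hb ->]]]]; rewrite hom_comm //.
apply: gen_in; exists (f a), (f b); split=> //; split=> //; exact: IH.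
Qed.

Lemma hom_lcs_omega (G K : group) (f : G -> K) g :
  is_hom f -> lcs_omega G g -> lcs_omega K (f g).
Proof. by move=> hf hg n; apply: hom_lcs. Qed.

Definition sg (e : int) : int := (-1) ^ e.

Lemma sgD e f : sg (e + f) = sg e * sg f.
Proof. by rewrite /sg exprzDr // unitrN1. Qed.
Lemma sg0 : sg 0 = 1. Proof. by []. Qed.
Lemma sg1 : sg 1 = -1. Proof. by rewrite /sg expr1z. Qed.
Lemma sgE e : sg e = 1 \/ sg e = -1.
Proof.
rewrite /sg; case: e => n.
  rewrite -exprnP -signr_odd; case: (odd n); [right|left]; by rewrite ?expr1 ?expr0.
rewrite NegzE -invr_expz -exprnP -signr_odd; case: (odd n.+1); [right|left];
  by rewrite ?expr1 ?expr0 ?invrN1 ?invr1.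
Qed.
Lemma sgN e : sg (- e) = sg e.
Proof.
have h : sg e * sg (- e) = 1 by rewrite -sgD subrr.
by case: (sgE e) h => ->; case: (sgE (- e)) => -> //; lia.
Qed.
Lemma sgS e : sg (e + 1) = - sg e. Proof. by rewrite sgD sg1; lia. Qed.
Lemma sgP e : sg (e - 1) = - sg e. Proof. by rewrite sgD sgN sg1; lia. Qed.

Section Conj.
Variable G : group.
Definition cj (u w : G) := gmul u (gmul w (ginv u)).

Lemma cj_hom u : is_hom (cj u).
Proof.
move=> a b; rewrite /cj !gmulA; congr gmul; congr gmul.
by rewrite -(gmulA _ (ginv u)) gmulV gmul1r.
Qed.

Lemma cj_mul u v w : cj (gmul u v) w = cj u (cj v w).
Proof. by rewrite /cj ginvM !gmulA. Qed.

Lemma cj1 w : cj gone w = w.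
Proof. by rewrite /cj ginv1 gmul1 gmul1r. Qed.

Lemma cjK u w : cj (ginv u) (cj u w) = w.
Proof. by rewrite -cj_mul gmulV cj1. Qed.

Lemma cjE u w v : cj u w = v -> gmul u w = gmul v u.
Proof. by move=> <-; rewrite /cj -!gmulA gmulV gmul1r. Qed.

Lemma cj_comm u w : gmul u w = gmul w u -> cj u w = w.
Proof. by move=> h; rewrite /cj gmulA h -gmulA gmulVr gmul1r. Qed.

Lemma cj_inv_pow u w (e a : int) : cj u w = ginv w ->
  cj (gpowz u e) (gpowz w a) = gpowz w (sg e * a).
Proof.
move=> h.
have h1 : forall a : int, cj u (gpowz w a) = gpowz w (- a).
  move=> b; rewrite (hom_powz (cj_hom u)) h -gpowzN1 -gpowzM; congr gpowz; lia.
have h2 : forall a : int, cj (ginv u) (gpowz w a) = gpowz w (- a).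
  move=> b; by rewrite -[in LHS](opprK b) -(h1 (- b)) cjK.
elim/int_ind3: e a => [|e IH|e IH] b; first by rewrite cj1 sg0 mul1r.
  by rewrite gpowzS cj_mul h1 IH sgS; congr gpowz; lia.
by rewrite gpowzP cj_mul h2 IH sgP; congr gpowz; lia.
Qed.

Lemma cj_fix_pow u w (e a : int) : gmul u w = gmul w u ->
  cj (gpowz u e) (gpowz w a) = gpowz w a.
Proof.
move=> h; apply: cj_comm; symmetry; exact: gpowz_comm2.
Qed.
End Conj.

Section GammaCalc.
Variables (G : group) (x y t : G).
Let z := comm x y.
Hypotheses (zx : gmul z x = gmul x z) (zy : gmul z y = gmul y z)
  (zt : gmul z t = gmul t z) (tx : cj t x = ginv x) (ty : cj t y = ginv y).

Lemma cjyx : cj y x = gmul (ginv z) x.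
Proof.
rewrite /z /comm !ginvM !ginvK /cj.
by rewrite -gmulA gmulV gmul1r !gmulA.
Qed.

Lemma cjyx_pow (b a : int) : cj (gpowz y b) (gpowz x a) =
  gmul (gpowz z (- (b * a))) (gpowz x a).
Proof.
have zxV : gmul (ginv z) x = gmul x (ginv z).
  by rewrite (gcommV zx).
have h1 : forall a : int, cj y (gpowz x a) = gmul (gpowz z (- a)) (gpowz x a).
  move=> c; rewrite (hom_powz (cj_hom y)) cjyx gpowz_mulc // -gpowzN1 -gpowzM.
  by congr (gmul (gpowz _ _) _); lia.
have h2 : forall a : int, cj (ginv y) (gpowz x a) = gmul (gpowz z a) (gpowz x a).
  move=> c; apply: (@gmulI _ (gpowz z (- c))).
  have e : cj (ginv y) (gpowz z (- c)) = gpowz z (- c).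
    rewrite -gpowzN1. apply: cj_fix_pow. done.
  rewrite -{1}e -(cj_hom (ginv y)) -h1 cjK gmulA -gpowzD.
  by rewrite [(- c + c)%R]addrC subrr gmul1.
elim/int_ind3: b => [|b IH|b IH]; first by rewrite cj1 mul0r oppr0 gmul1.
  rewrite gpowzS cj_mul h1 cj_hom IH (cj_fix_pow _ _ (esym zy)) gmulA -gpowzD.
  congr (gmul (gpowz _ _) _); lia.
rewrite gpowzP cj_mul h2 cj_hom IH (cj_fix_pow _ _ (esym zy)) gmulA -gpowzD.
congr (gmul (gpowz _ _) _); lia.
Qed.

Lemma SW1 p (e a : int) : gmul (gmul p (gpowz t e)) (gpowz x a) =
  gmul (gmul p (gpowz x (sg e * a))) (gpowz t e).
Proof. by rewrite -!gmulA (cjE (cj_inv_pow e a tx)). Qed.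

Lemma SW2 p (e a : int) : gmul (gmul p (gpowz t e)) (gpowz y a) =
  gmul (gmul p (gpowz y (sg e * a))) (gpowz t e).
Proof. by rewrite -!gmulA (cjE (cj_inv_pow e a ty)). Qed.

Lemma SW3 p (e c : int) : gmul (gmul p (gpowz t e)) (gpowz z c) =
  gmul (gmul p (gpowz z c)) (gpowz t e).
Proof. by rewrite -!gmulA (gpowz_comm2 _ _ (esym zt)). Qed.

Lemma SW4 p (c a : int) : gmul (gmul p (gpowz z c)) (gpowz x a) =
  gmul (gmul p (gpowz x a)) (gpowz z c).
Proof. by rewrite -!gmulA (gpowz_comm2 _ _ zx). Qed.

Lemma SW5 p (c a : int) : gmul (gmul p (gpowz z c)) (gpowz y a) =
  gmul (gmul p (gpowz y a)) (gpowz z c).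
Proof. by rewrite -!gmulA (gpowz_comm2 _ _ zy). Qed.

Lemma SW6 p (b a : int) : gmul (gmul p (gpowz y b)) (gpowz x a) =
  gmul (gmul (gmul p (gpowz x a)) (gpowz y b)) (gpowz z (- (b * a))).
Proof.
rewrite -!gmulA (cjE (cjyx_pow b a)) -gmulA; congr gmul.
rewrite gmulA (gpowz_comm2 _ _ zx) -gmulA; congr gmul.
by rewrite (gpowz_comm2 _ _ zy).
Qed.

Lemma MG p (w : G) (i j : int) : gmul (gmul p (gpowz w i)) (gpowz w j) = gmul p (gpowz w (i + j)).
Proof. by rewrite gpowzD gmulA. Qed.

Definition sG (a b c e : int) : G :=
  gmul (gpowz x a) (gmul (gpowz y b) (gmul (gpowz z c) (gpowz t e))).

Lemma sG_mul a b c e a' b' c' e' :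
  gmul (sG a b c e) (sG a' b' c' e') =
  sG (a + sg e * a') (b + sg e * b') (c + c' - b * (sg e * a')) (e + e').
Proof.
rewrite /sG !gmulA SW1 SW2 SW3 MG SW4 SW6 -gpowzD MG SW5 MG MG.
congr (gmul (gmul _ (gpowz _ _)) _); lia.
Qed.

End GammaCalc.


Section Heis.
Variable R : comNzRingType.
Variable P : R.
Variable nc : R -> R.
Hypothesis ncP : forall u (k : int), nc (u + k%:~R * P) = nc u.
Hypothesis ncE : forall u, exists k : int, nc u = u + k%:~R * P.

Lemma nc_nc u : nc (nc u) = nc u.
Proof. by case: (ncE u) => k E; rewrite {1}E ncP. Qed.

Lemma ncDl u v w : nc (nc u + v - w) = nc (u + v - w).
Proof.
case: (ncE u) => k E; rewrite E -(ncP (u + v - w) k); congr nc; ring.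
Qed.

Lemma ncDr u v w : nc (v + nc u - w) = nc (v + u - w).
Proof.
case: (ncE u) => k E; rewrite E -(ncP (v + u - w) k); congr nc; ring.
Qed.

Record H := MkH { ha : R; hb : R; hc : R; he : int; hok : nc hc = hc }.

Lemma H_ext p q : ha p = ha q -> hb p = hb q -> hc p = hc q -> he p = he q -> p = q.
Proof.
case: p => a b c e h; case: q => a' b' c' e' h' /= -> -> e1 ->.
move: h; rewrite e1 => h; congr MkH; exact: proof_irrelevance.
Qed.

Definition mk a b c e := @MkH a b (nc c) e (nc_nc c).
Definition hsg (e : int) : R := (sg e)%:~R.

Lemma hsgD e f : hsg (e + f) = hsg e * hsg f.
Proof. by rewrite /hsg sgD intrM. Qed.
Lemma hsgN e : hsg (- e) = hsg e.
Proof. by rewrite /hsg sgN. Qed.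
Lemma hsgE e : hsg e = 1 \/ hsg e = -1.
Proof. by rewrite /hsg; case: (sgE e) => ->; [left|right]. Qed.
Lemma hsg0 : hsg 0 = 1. Proof. by rewrite /hsg sg0. Qed.
Lemma hsg1 : hsg 1 = -1. Proof. by rewrite /hsg sg1. Qed.

Definition hmul p q := mk (ha p + hsg (he p) * ha q) (hb p + hsg (he p) * hb q)
  (hc p + hc q - hb p * (hsg (he p) * ha q)) (he p + he q).
Definition hinv p := mk (- (hsg (he p) * ha p)) (- (hsg (he p) * hb p))
  (- (ha p * hb p) - hc p) (- he p).
Definition hone := mk 0 0 0 0.

Lemma hmulA p q r : hmul p (hmul q r) = hmul (hmul p q) r.
Proof.
apply: H_ext => /=; rewrite ?hsgD.
- ring.
- ring.
- rewrite ncDl ncDr; congr nc.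
  case: (hsgE (he p)) => ->; ring.
- by rewrite addrA.
Qed.

Lemma hmul1 p : hmul hone p = p.
Proof.
apply: H_ext => /=; rewrite ?hsg0.
- ring.
- ring.
- rewrite ncDl -[RHS](hok p); congr nc; ring.
- by rewrite add0r.
Qed.

Lemma hmulV p : hmul (hinv p) p = hone.
Proof.
apply: H_ext => /=; rewrite ?hsgN.
- case: (hsgE (he p)) => ->; ring.
- case: (hsgE (he p)) => ->; ring.
- rewrite ncDl; congr nc. case: (hsgE (he p)) => ->; ring.
- by rewrite addNr.
Qed.

Definition HG := @Defs.Group H hmul hinv hone hmulA hmul1 hmulV.


Lemma ncN u v : nc (v - nc u) = nc (v - u).
Proof.
case: (ncE u) => k E; rewrite E -(ncP (v - u) (- k)); congr nc.
rewrite mulrNz; ring.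
Qed.

Lemma mk_nc a b c e : mk a b (nc c) e = mk a b c e.
Proof. by apply: H_ext => //=; rewrite nc_nc. Qed.

Lemma mk_mul a b c e a' b' c' e' : hmul (mk a b c e) (mk a' b' c' e') =
  mk (a + hsg e * a') (b + hsg e * b') (c + c' - b * (hsg e * a')) (e + e').
Proof. by apply: H_ext => //=; rewrite ncDl ncDr. Qed.

Lemma mk_inv a b c e : hinv (mk a b c e) =
  mk (- (hsg e * a)) (- (hsg e * b)) (- (a * b) - c) (- e).
Proof. by apply: H_ext => //=; rewrite ncN. Qed.

Lemma hmk p : p = mk (ha p) (hb p) (hc p) (he p).
Proof. by apply: H_ext => //=; rewrite hok. Qed.

Local Notation X a := (mk a 0 0 0).
Local Notation Y b := (mk 0 b 0 0).
Local Notation Z c := (mk 0 0 c 0).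
Local Notation T e := (mk 0 0 0 e).

Lemma powX a (i : int) : @gpowz HG (X a) i = X (i%:~R * a).
Proof.
elim/int_ind3: i => [|i IH|i IH].
- by rewrite mul0r.
- rewrite gpowzS IH /= mk_mul hsg0; congr mk; rewrite ?intrD; ring.
- rewrite gpowzP IH /= mk_inv mk_mul hsg0; congr mk; rewrite ?intrD ?intrN; ring.
Qed.

Lemma powY b (i : int) : @gpowz HG (Y b) i = Y (i%:~R * b).
Proof.
elim/int_ind3: i => [|i IH|i IH].
- by rewrite mul0r.
- rewrite gpowzS IH /= mk_mul hsg0; congr mk; rewrite ?intrD; ring.
- rewrite gpowzP IH /= mk_inv mk_mul hsg0; congr mk; rewrite ?intrD ?intrN; ring.
Qed.

Lemma powZ c (i : int) : @gpowz HG (Z c) i = Z (i%:~R * c).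
Proof.
elim/int_ind3: i => [|i IH|i IH].
- by rewrite mul0r.
- rewrite gpowzS IH /= mk_mul hsg0; congr mk; rewrite ?intrD; ring.
- rewrite gpowzP IH /= mk_inv mk_mul hsg0; congr mk; rewrite ?intrD ?intrN; ring.
Qed.

Lemma powT (e : int) : @gpowz HG (T 1) e = T e.
Proof.
elim/int_ind3: e => [|e IH|e IH].
- by [].
- rewrite gpowzS IH /= mk_mul; congr mk; ring.
- rewrite gpowzP IH /= mk_inv mk_mul; congr mk; ring.
Qed.

Lemma commXY a b : @comm HG (X a) (Y b) = Z (a * b).
Proof.
rewrite /comm /= !mk_inv !mk_mul ?hsgD ?hsgN ?hsg0; congr mk; ring.
Qed.

Lemma Zcomm c p : @gmul HG (Z c) p = gmul p (Z c).
Proof.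
rewrite [p]hmk /= !mk_mul hsg0; congr mk; ring.
Qed.

Lemma cjTX a : @cj HG (T 1) (X a) = @ginv HG (X a).
Proof.
rewrite /cj /= !mk_inv !mk_mul ?hsgD ?hsgN ?hsg0 ?hsg1; congr mk; ring.
Qed.

Lemma cjTY b : @cj HG (T 1) (Y b) = @ginv HG (Y b).
Proof.
rewrite /cj /= !mk_inv !mk_mul ?hsgD ?hsgN ?hsg0 ?hsg1; congr mk; ring.
Qed.

Lemma prodXYZT a b c e :
  @gmul HG (X a) (@gmul HG (Y b) (@gmul HG (Z c) (T e))) = mk a b c e.
Proof.
rewrite /= !mk_mul hsg0; congr mk; ring.
Qed.

Lemma comm_a p q : ha (@comm HG p q) =
  (1 - hsg (he q)) * ha p - (1 - hsg (he p)) * ha q.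
Proof.
rewrite /comm /= ?hsgD ?hsgN.
case: (hsgE (he p)) => ->; case: (hsgE (he q)) => ->; ring.
Qed.

Lemma comm_b p q : hb (@comm HG p q) =
  (1 - hsg (he q)) * hb p - (1 - hsg (he p)) * hb q.
Proof.
rewrite /comm /= ?hsgD ?hsgN.
case: (hsgE (he p)) => ->; case: (hsgE (he q)) => ->; ring.
Qed.

Lemma comm_e p q : he (@comm HG p q) = 0.
Proof.
rewrite /comm /=; lia.
Qed.


Lemma mk_shift a b c e (k : int) : mk a b (c + k%:~R * P) e = mk a b c e.
Proof. by apply: H_ext => //=; rewrite ncP. Qed.

Lemma gmulHG p q : @gmul HG p q = hmul p q. Proof. by []. Qed.
Lemma ginvHG p : @ginv HG p = hinv p. Proof. by []. Qed.

Lemma commTX a : @comm HG (T 1) (X a) = X (- (2 * a)).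
Proof.
rewrite /comm !gmulHG !ginvHG !mk_inv !mk_mul ?hsgD ?hsgN ?hsg0 ?hsg1.
congr mk; ring.
Qed.

Lemma commYX a : @comm HG (Y 1) (X a) = Z (- a).
Proof.
rewrite /comm !gmulHG !ginvHG !mk_inv !mk_mul ?hsgD ?hsgN ?hsg0 ?hsg1.
congr mk; ring.
Qed.

Lemma mulXZ a c : @gmul HG (X a) (Z c) = mk a 0 c 0.
Proof. rewrite /= mk_mul; congr mk; ring. Qed.

End Heis.


Section IntInst.
Variable N : nat.
Definition ncZ (u : int) : int := (u %% (N : int))%Z.
Lemma ncZP u (k : int) : ncZ (u + k%:~R * (N : int)) = ncZ u.
Proof. by rewrite /ncZ intz addrC modzMDl. Qed.
Lemma ncZE u : exists k : int, ncZ u = u + k%:~R * (N : int).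
Proof. exists (- (u %/ N)%Z); rewrite intz /ncZ {2}(divz_eq u N); ring. Qed.
Definition HZ := HG ncZP ncZE.
Definition mkZ := mk ncZP ncZE.
End IntInst.

Lemma gpowz_mod (G : group) (z : G) (N : nat) (u : int) :
  gpowz z N = gone -> gpowz z (u %% N)%Z = gpowz z u.
Proof.
move=> h; rewrite [in RHS](divz_eq u N) [in RHS]gpowzD mulrC gpowzM h gpowz_one gmul1 //.
Qed.

Lemma lcsHZ (N m : nat) (p : HZ N) : lcs (HZ N) m p ->
  ((0 < m)%N -> he p = 0) /\ (exists k, ha p = 2 ^+ m * k) /\ (exists k, hb p = 2 ^+ m * k).
Proof.
elim: m p => [|m IH] p.
  by move=> _; split=> //; split; [exists (ha p)|exists (hb p)]; rewrite expr0 mul1r.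
move=> hp; apply: (hp (fun p : HZ N => ((0 < m.+1)%N -> he p = 0) /\
   (exists k, ha p = 2 ^+ m.+1 * k) /\ (exists k, hb p = 2 ^+ m.+1 * k))).
- split.
    split=> //; split; exists 0; rewrite /= mulr0 //.
  split.
    move=> a b [ea [[ka Ea] [kb Eb]]] [eb [[la La] [lb Lb]]].
    split; first by move=> _; rewrite /= ea // eb.
    rewrite /= ea // hsg0 Ea Eb La Lb.
    by split; [exists (ka + la)|exists (kb + lb)]; ring.
  move=> a [ea [[ka Ea] [kb Eb]]].
  split; first by move=> _; rewrite /= ea.
  rewrite /= ea // hsg0 Ea Eb.
  by split; [exists (- ka)|exists (- kb)]; ring.
- move=> s [a [b [_ [hb ->]]]].
  case: (IH b hb) => eb [[ka Ea] [kb Eb]].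
  split; first by move=> _; apply: comm_e.
  rewrite comm_a comm_b Ea Eb.
  case: (posnP m) => [m0|mpos].
    rewrite m0 in Ea Eb *; rewrite !expr1 !expr0 in Ea Eb *.
    case: (@hsgE int (he a)) => ->; case: (@hsgE int (he b)) => ->.
    - by split; exists 0; ring.
    - by split; [exists (ha a)|exists (Aux.hb a)]; ring.
    - by split; [exists (- ka)|exists (- kb)]; ring.
    - by split; [exists (ha a - ka)|exists (Aux.hb a - kb)]; ring.
  rewrite eb // hsg0.
  case: (@hsgE int (he a)) => ->.
    by split; exists 0; ring.
  by split; [exists (- ka)|exists (- kb)]; rewrite exprS; ring.
Qed.

Lemma powN1 (N m : nat) : exists k : int, (N%:Z + 1) ^+ m = 1 + k * N%:Z.
Proof.
elim: m => [|m [k Ek]]; first by exists 0; rewrite expr0; ring.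
exists (k * N%:Z + k + 1); rewrite exprS Ek; ring.
Qed.

Lemma ZinHZ (N m hN : nat) : (2 * hN = N.+1)%N -> forall a c : int,
  lcs (HZ N) m (mkZ N (2 ^+ m * a) 0 c 0).
Proof.
move=> ehN; elim: m => [//|m IH] a c.
set u := c * (hN%:Z) ^+ m.
have E : mkZ N (2 ^+ m.+1 * a) 0 c 0 =
  @gmul (HZ N) (@comm (HZ N) (mkZ N 0 0 0 1) (mkZ N (2 ^+ m * (- a)) 0 0 0))
               (@comm (HZ N) (mkZ N 0 1 0 0) (mkZ N (2 ^+ m * (- u)) 0 0 0)).
  rewrite /mkZ commTX commYX mulXZ.
  case: (powN1 N m) => k Ek.
  rewrite -(mk_shift _ _ _ _ _ _ (c * k)); congr mk.
    rewrite exprS; ring.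
  have -> : - (2 ^+ m * - u) = c * (2 * hN%:Z) ^+ m by rewrite /u exprMn; ring.
  have -> : 2 * hN%:Z = N%:Z + 1 by rewrite -[2]/(2%:Z) -PoszM ehN; lia.
  rewrite Ek intz; ring.
rewrite E.
have sub := lcs_sub (HZ N) m.+1.
case: sub => _ [hm _]; apply: hm; apply: gen_in.
  by exists (mkZ N 0 0 0 1), (mkZ N (2 ^+ m * - a) 0 0 0); split=> //; split=> //; apply: IH.
by exists (mkZ N 0 1 0 0), (mkZ N (2 ^+ m * - u) 0 0 0); split=> //; split=> //; apply: IH.
Qed.

Lemma pow2_zero (a : int) : (forall m : nat, exists k : int, a = 2 ^+ m * k) -> a = 0.
Proof.
move=> h; case: (h `|a|%N) => k Ek.
have [k0|kn0] := eqVneq k 0; first by rewrite Ek k0 mulr0.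
have : (`|a| = 2 ^ `|a| * `|k|)%N by rewrite {1}Ek abszM abszX.
have : (0 < `|k|)%N by rewrite absz_gt0.
have := ltn_expl `|a|%N (isT : (1 < 2)%N).
move=> h1 h2 h3; exfalso; move: h1; rewrite {1}h3; nia.
Qed.

Section Part1.
Variable n : nat.
Hypothesis n_odd : odd n.
Variables (G : group) (x y t : G).
Hypothesis pres : presents_gamma n x y t.

Local Notation N := (n ^ 2)%N.
Local Notation z := (comm x y).

Let rels : gamma_rels n x y t := proj1 pres.

Lemma p1_zN : gpowz z N = gone. Proof. by case: rels. Qed.
Lemma p1_zt : gmul z t = gmul t z. Proof. case: rels => _ [h _]; exact/comm1P. Qed.
Lemma p1_zx : gmul z x = gmul x z. Proof. case: rels => _ [_ [h _]]; exact/comm1P. Qed.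
Lemma p1_zy : gmul z y = gmul y z. Proof. case: rels => _ [_ [_ [h _]]]; exact/comm1P. Qed.
Lemma p1_tx : cj t x = ginv x. Proof. by case: rels => _ [_ [_ [_ [h _]]]]. Qed.
Lemma p1_ty : cj t y = ginv y. Proof. by case: rels => _ [_ [_ [_ [_ h]]]]. Qed.

Local Notation HN := (HZ N).
Local Notation X1 := (mkZ N 1 0 0 0).
Local Notation Y1 := (mkZ N 0 1 0 0).
Local Notation T1 := (mkZ N 0 0 0 1).

Lemma relsHN : gamma_rels n (X1 : HN) Y1 T1.
Proof.
rewrite /gamma_rels /mkZ commXY; split.
  change (@gpowz HN (mk (ncZP N) (ncZE N) 0 0 (1 * 1) 0) N = gone).
  rewrite powZ; rewrite -[RHS](mk_shift _ _ 0 0 0 0 1).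
  by congr mk; rewrite !intz; ring.
split; first by apply/comm1P; apply: Zcomm.
split; first by apply/comm1P; apply: Zcomm.
split; first by apply/comm1P; apply: Zcomm.
split; [exact: cjTX | exact: cjTY].
Qed.

Let fex := proj2 pres HN X1 Y1 T1 relsHN.
Let fsig := constructive_indefinite_description _ fex.
Definition p1f : G -> HN := proj1_sig fsig.
Lemma p1f_spec : [/\ is_hom p1f, p1f x = X1, p1f y = Y1 & p1f t = T1].
Proof. by case: (proj2_sig fsig) => h1 h2 h3 h4 _; split. Qed.

Definition p1s (p : HN) : G := sG x y t (ha p) (Aux.hb p) (hc p) (he p).

Lemma p1s_hom : is_hom p1s.
Proof.
move=> p q; rewrite /p1s sG_mul; last 5 first.
- exact: p1_zx. - exact: p1_zy. - exact: p1_zt. - exact: p1_tx. - exact: p1_ty.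
rewrite /= /hsg /ncZ !intz.
by rewrite /sG gpowz_mod //; exact: p1_zN.
Qed.

Lemma p1s_mk a b c e : p1s (mkZ N a b c e) = sG x y t a b c e.
Proof. by rewrite /p1s /= /ncZ /sG gpowz_mod //; exact: p1_zN. Qed.

Lemma p1sf g : p1s (p1f g) = g.
Proof.
case: (proj2 pres G x y t rels) => f0 [_ _ _ _ U].
case: p1f_spec => hf fx fy ft.
rewrite (U (fun g => p1s (p1f g))) //; last 4 first.
- exact: hom_comp hf p1s_hom.
- by rewrite fx p1s_mk /sG gpowz1 /= !gmul1r.
- by rewrite fy p1s_mk /sG gpowz1 /= !gmul1r gmul1.
- by rewrite ft p1s_mk /sG gpowz1 /= !gmul1.
by rewrite -(U (fun g => g)).
Qed.

Lemma sG_z (j : int) : sG x y t 0 0 j 0 = gpowz z j.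
Proof. by rewrite /sG /= gmul1 gmul1 gmul1r. Qed.

Lemma p1_normal g : g = sG x y t (ha (p1f g)) (Aux.hb (p1f g)) (hc (p1f g)) (he (p1f g)).
Proof. by rewrite -[in LHS](p1sf g). Qed.

Lemma p1_lcs m g : (0 < m)%N -> lcs G m g -> exists a b c ka kb,
  [/\ g = sG x y t a b c 0, a = 2 ^+ m * ka & b = 2 ^+ m * kb].
Proof.
move=> m0 hg; case: p1f_spec => hf _ _ _.
have := lcsHZ (hom_lcs hf hg) => -[he0 [[ka Ea] [kb Eb]]].
exists (ha (p1f g)), (Aux.hb (p1f g)), (hc (p1f g)), ka, kb; split=> //.
by rewrite -(he0 m0); exact: p1_normal.
Qed.

Lemma p1_omega g : lcs_omega G g <-> exists j : int, g = gpowz z j.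
Proof.
split.
  move=> hg; case: p1f_spec => hf _ _ _.
  have ha0 : ha (p1f g) = 0.
    apply: pow2_zero => m; have := lcsHZ (hom_lcs hf (hg m)); by case=> _ [].
  have hb0 : Aux.hb (p1f g) = 0.
    apply: pow2_zero => m; have := lcsHZ (hom_lcs hf (hg m)); by case=> _ [].
  have he0 : he (p1f g) = 0.
    have := lcsHZ (hom_lcs hf (hg 1%N)); by case=> h _; apply: h.
  exists (hc (p1f g)); by rewrite {1}(p1_normal g) ha0 hb0 he0 sG_z.
move=> [j ->] m.
have [hN ehN] : exists hN : nat, (2 * hN = N.+1)%N.
  exists (N.+1./2); have := odd_double_half N.+1.
  rewrite /= oddX n_odd orbT /= add0n => E; rewrite -[RHS]E; lia.
have := hom_lcs p1s_hom (ZinHZ m ehN 0 j).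
by rewrite p1s_mk mulr0 sG_z.
Qed.

Lemma p1_central (j : int) w : gmul (gpowz z j) w = gmul w (gpowz z j).
Proof.
rewrite -sG_z -p1s_mk -[w]p1sf -!p1s_hom; congr p1s.
exact: Zcomm.
Qed.

Lemma p1_order (j : nat) : (0 < j < N)%N -> gpown z j <> gone.
Proof.
move=> /andP [j0 jN] h.
case: p1f_spec => hf fx fy ft.
have := hom_powz hf z j; rewrite gpowz_nat h (hom1 hf) (hom_comm hf) fx fy.
rewrite /mkZ commXY powZ => E.
have := congr1 (@hc _ (ncZ N)) E; rewrite /= /ncZ mod0z mulr1 intz modz_nat modn_small //.
  move=> E'; move: j0; lia. by rewrite muln1.
Qed.

Lemma p1_omega1 g : lcs_omega1 G g <-> g = gone.
Proof.
split; last first.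
  move=> ->; by case: (gen_sub (fun g0 : G => exists a b, True /\ lcs_omega G b /\ g0 = comm a b)).
move=> hg; apply: (hg (fun g => g = gone)).
  split=> //; split; first by move=> a b -> ->; rewrite gmul1.
  by move=> a ->; rewrite ginv1.
move=> s [a [b [_ [hb ->]]]]; apply/comm1P.
case/p1_omega: hb => j ->; symmetry; exact: p1_central.
Qed.
End Part1.


Lemma natz_rat (n : nat) : (n%:Z)%:~R = n%:R :> rat. Proof. by []. Qed.

Lemma fracQP u (k : int) : fracQ (u + k%:~R * 1) = fracQ u.
Proof.
rewrite /fracQ mulr1 floorDrz ?intr_int // intrKfloor intrD; ring.
Qed.
Lemma fracQE u : exists k : int, fracQ u = u + k%:~R * 1.
Proof. by exists (- Num.floor u); rewrite /fracQ mulr1 intrN. Qed.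

Definition HQ := HG fracQP fracQE.
Definition mkQ := mk fracQP fracQE.

Lemma fracQ_ge0 q : 0 <= fracQ q.
Proof. by rewrite /fracQ subr_ge0 floor_le. Qed.
Lemma fracQ_lt1 q : fracQ q < 1.
Proof. rewrite /fracQ; have := floorD1_gt q; rewrite intrD; lra. Qed.
Lemma fracQ_id q : 0 <= q -> q < 1 -> fracQ q = q.
Proof.
move=> h0 h1; rewrite /fracQ.
have -> : Num.floor q = 0.
  apply/eqP; rewrite eq_le floor_le0 h1 /= floor_ge0 h0 //.
by rewrite subr0.
Qed.

Lemma denq_dvd (q : rat) (j d : int) : d != 0 -> q = j%:~R / d%:~R -> (denq q %| d)%Z.
Proof.
move=> d0 E.
have e1 : numq q * d = j * denq q.
  apply/eqP; rewrite -(eqr_int rat) !intrM numqE E; apply/eqP.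
  by field; rewrite intr_eq0.
have : (denq q %| numq q * d)%Z by rewrite e1 dvdz_mull.
rewrite Gauss_dvdzr // coprimezE coprime_sym; exact: coprime_num_den.
Qed.

Lemma fracQ_den q : (denq (fracQ q) %| denq q)%Z.
Proof.
apply: (@denq_dvd _ (numq q - Num.floor q * denq q)); first exact: denq_neq0.
rewrite /fracQ intrD intrN intrM numqE; field.
by rewrite intr_eq0 denq_neq0.
Qed.

Lemma fracQ_eq (M : int) (k k' : int) : M != 0 ->
  fracQ (k%:~R / M%:~R) = fracQ (k'%:~R / M%:~R) -> exists r : int, k = k' + r * M.
Proof.
move=> M0; rewrite /fracQ.
set u := Num.floor (k%:~R / M%:~R : rat); set v := Num.floor (k'%:~R / M%:~R : rat).
move=> E; exists (u - v).
apply/eqP; rewrite -(eqr_int rat) !intrD !intrM !intrB; apply/eqP.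
have M0' : M%:~R != 0 :> rat by rewrite intr_eq0.
have E2 : (k%:~R : rat) = (k'%:~R / M%:~R + u%:~R - v%:~R) * M%:~R.
  rewrite -[LHS](mulfVK M0'); congr (_ * _); move: E; lra.
rewrite E2; field; exact: M0'.
Qed.

Lemma odd_pos n : odd n -> (0 < n)%N. Proof. by case: n. Qed.

Lemma div2m (a a' : int) (n n' : nat) (m : nat) (ka : int) :
  odd n -> odd n' -> a%:~R * (1 / n%:R) = a'%:~R * (1 / n'%:R) :> rat ->
  a' = 2 ^+ m * ka -> exists k, a = 2 ^+ m * k.
Proof.
move=> on on' E Ea.
have n0 : n%:R != 0 :> rat by rewrite pnatr_eq0; case: n on {E}.
have n0' : n'%:R != 0 :> rat by rewrite pnatr_eq0; case: n' on' {E}.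
have e : a * n' = a' * n.
  apply/eqP; rewrite -(eqr_int rat) !intrM !natz_rat; apply/eqP.
  move: E; rewrite !div1r => E.
  transitivity ((a%:~R / n%:R) * n%:R * n'%:R : rat); first by field.
  by rewrite E; field.
have : (2 ^+ m %| a * n')%Z by rewrite e Ea -mulrA dvdz_mulr.
rewrite Gauss_dvdzl; last by apply: coprimezXl; rewrite coprimezE /= coprime2n.
by case/dvdzP => k ->; exists k; rewrite mulrC.
Qed.

Section Part2.
Unset Implicit Arguments.
Variables (Gam : nat -> group) (gx gy gt : forall n, Gam n)
  (phi : forall m n, Gam m -> Gam n) (C : group) (iota : forall n, Gam n -> C).
Hypothesis hpres : forall n, odd n -> presents_gamma n (gx n) (gy n) (gt n).
Hypothesis hphi : forall m n, odd m -> odd n -> (m %| n)%N ->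
  [/\ is_hom (phi m n), phi m n (gt m) = gt n,
      phi m n (gx m) = gpown (gx n) (n %/ m) &
      phi m n (gy m) = gpown (gy n) (n %/ m)].
Hypothesis hcol : is_colimit phi iota.
Set Implicit Arguments.

Lemma iota_hom n : odd n -> is_hom (iota n).
Proof. by case: hcol => h _; apply: h. Qed.

Lemma iota_phi m n g : odd m -> odd n -> (m %| n)%N -> iota n (phi m n g) = iota m g.
Proof. by case: hcol => _ [h _] om on mn; apply: h. Qed.

Lemma phi_hom m n : odd m -> odd n -> (m %| n)%N -> is_hom (phi m n).
Proof. by move=> om on mn; case: (hphi m n om on mn). Qed.

Lemma oddM' n1 n2 : odd n1 -> odd n2 -> odd (n1 * n2).
Proof. by move=> h1 h2; rewrite oddM h1 h2. Qed.

Lemma phi_l n1 n2 : odd n1 -> odd n2 -> is_hom (phi n1 (n1 * n2)).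
Proof. by move=> o1 o2; apply: phi_hom => //; [exact: oddM'|exact: dvdn_mulr]. Qed.
Lemma phi_r n1 n2 : odd n1 -> odd n2 -> is_hom (phi n2 (n1 * n2)).
Proof. by move=> o1 o2; apply: phi_hom => //; [exact: oddM'|exact: dvdn_mull]. Qed.

Lemma liftl n1 n2 w : odd n1 -> odd n2 ->
  iota n1 w = iota (n1 * n2) (phi n1 (n1 * n2) w).
Proof. by move=> o1 o2; rewrite iota_phi ?oddM' ?dvdn_mulr. Qed.

Lemma liftr n1 n2 w : odd n1 -> odd n2 ->
  iota n2 w = iota (n1 * n2) (phi n2 (n1 * n2) w).
Proof. by move=> o1 o2; rewrite iota_phi ?oddM' ?dvdn_mull. Qed.

Definition inU (c : C) := exists n g, odd n /\ c = iota n g.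

Lemma inU_iota n (e : odd n) g : inU (iota n g).
Proof. by exists n, g. Qed.

Lemma inU1 : inU gone.
Proof. exists 1%N, gone; split=> //; by rewrite (hom1 (iota_hom _)). Qed.

Lemma inUM a b : inU a -> inU b -> inU (gmul a b).
Proof.
move=> [n1 [g1 [o1 ->]]] [n2 [g2 [o2 ->]]].
exists (n1 * n2)%N, (gmul (phi n1 (n1 * n2) g1) (phi n2 (n1 * n2) g2)); split; first exact: oddM'.
by rewrite (iota_hom (oddM' o1 o2)) -liftl // -liftr.
Qed.

Lemma inUV a : inU a -> inU (ginv a).
Proof.
move=> [n1 [g1 [o1 ->]]]; exists n1, (ginv g1); split=> //.
by rewrite (homV (iota_hom o1)).
Qed.

Definition Ut := {c : C | inU c}.
Definition umul (p q : Ut) : Ut := exist _ _ (inUM (proj2_sig p) (proj2_sig q)).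
Definition uinv (p : Ut) : Ut := exist _ _ (inUV (proj2_sig p)).
Definition uone : Ut := exist _ _ inU1.

Lemma Uext (p q : Ut) : proj1_sig p = proj1_sig q -> p = q.
Proof.
case: p => a pa; case: q => b pb /= e; subst b; congr exist; exact: proof_irrelevance.
Qed.

Lemma umulA p q r : umul p (umul q r) = umul (umul p q) r.
Proof. by apply: Uext; rewrite /= gmulA. Qed.
Lemma umul1 p : umul uone p = p.
Proof. by apply: Uext; rewrite /= gmul1. Qed.
Lemma umulV p : umul (uinv p) p = uone.
Proof. by apply: Uext; rewrite /= gmulV. Qed.

Definition UG := @Defs.Group Ut umul uinv uone umulA umul1 umulV.

Definition fU n (g : Gam n) : UG :=
  match (odd n =P true) with
  | ReflectT e => exist _ (iota n g) (inU_iota e g)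
  | ReflectF _ => uone
  end.

Lemma fU_val n (g : Gam n) : odd n -> proj1_sig (@fU n g) = iota n g.
Proof. by rewrite /fU; case: (odd n =P true). Qed.

Lemma surj c : inU c.
Proof.
case: hcol => ih [ic U].
have fh : forall n, odd n -> is_hom (@fU n).
  move=> n on a b; apply: Uext; by rewrite /= !fU_val // (iota_hom on).
have fc : forall m n, odd m -> odd n -> (m %| n)%N -> forall g, @fU n (phi m n g) = @fU m g.
  move=> m n om on mn g; apply: Uext; by rewrite !fU_val // iota_phi.
case: (U UG (@fU) fh fc) => h [hh hf _].
case: (U C iota ih ic) => h0 [_ _ hu0].
have E2 : c = h0 c := hu0 (fun c => c) (@hom_id C) (fun n on g => erefl) c.
have E1 : proj1_sig (h c) = h0 c.
  apply: (hu0 (fun c => proj1_sig (h c))).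
  - move=> a b; by rewrite hh.
  - by move=> n on g; rewrite hf // fU_val.
have -> : c = proj1_sig (h c) by rewrite E1.
exact: proj2_sig (h c).
Qed.

Lemma lcs_union m c : lcs C m c ->
  exists n w, [/\ odd n, lcs (Gam n) m w & c = iota n w].
Proof.
elim: m c => [|m IH] c.
  by move=> _; case: (surj c) => n [g [on ->]]; exists n, g.
move=> hc; apply: (hc (fun c => exists n w, [/\ odd n, lcs (Gam n) m.+1 w & c = iota n w])).
- split.
    exists 1%N, gone; split=> //; first by case: (lcs_sub (Gam 1) m.+1).
    by rewrite (hom1 (iota_hom _)).
  split.
    move=> a b [n1 [w1 [o1 l1 ->]]] [n2 [w2 [o2 l2 ->]]].
    exists (n1 * n2)%N, (gmul (phi n1 (n1 * n2) w1) (phi n2 (n1 * n2) w2)); split.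
    + exact: oddM'.
    + case: (lcs_sub (Gam (n1 * n2)) m.+1) => _ [hm _]; apply: hm;
        apply: hom_lcs => //; [exact: phi_l | exact: phi_r].
    + by rewrite (iota_hom (oddM' o1 o2)) -liftl // -liftr.
  move=> a [n1 [w1 [o1 l1 ->]]]; exists n1, (ginv w1); split=> //.
    by case: (lcs_sub (Gam n1) m.+1) => _ [_ hi]; apply: hi.
  by rewrite (homV (iota_hom o1)).
- move=> s [a [b [_ [hb ->]]]].
  case: (surj a) => n1 [w1 [o1 ->]].
  case: (IH b hb) => n2 [w2 [o2 l2 ->]].
  have o := oddM' o1 o2.
  exists (n1 * n2)%N, (comm (phi n1 (n1 * n2) w1) (phi n2 (n1 * n2) w2)); split=> //.
    apply: gen_in; exists (phi n1 (n1 * n2) w1), (phi n2 (n1 * n2) w2); split=> //; split=> //.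
    apply: hom_lcs l2; exact: phi_r.
  by rewrite (hom_comm (iota_hom o)) -liftl // -liftr.
Qed.

Definition Xq (n : nat) : HQ := mkQ (1 / n%:R) 0 0 0.
Definition Yq (n : nat) : HQ := mkQ 0 (1 / n%:R) 0 0.
Definition Tq : HQ := mkQ 0 0 0 1.

Lemma relsHQ n : odd n -> gamma_rels n (Xq n) (Yq n) Tq.
Proof.
move=> on; have n0 : n%:R != 0 :> rat by rewrite pnatr_eq0; case: n on.
rewrite /gamma_rels /Xq /Yq /Tq /mkQ commXY; split.
  change (@gpowz HQ (mk fracQP fracQE 0 0 (1 / n%:R * (1 / n%:R)) 0) (n ^ 2)%N = gone).
  rewrite powZ; rewrite -[RHS](mk_shift _ _ 0 0 0 0 1).
  congr mk; rewrite natz_rat natrX; field; exact: n0.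
split; first by apply/comm1P; apply: Zcomm.
split; first by apply/comm1P; apply: Zcomm.
split; first by apply/comm1P; apply: Zcomm.
split; [exact: cjTX | exact: cjTY].
Qed.

Definition Fspec n (f : Gam n -> HQ) := odd n ->
  [/\ is_hom f, f (gx n) = Xq n, f (gy n) = Yq n, f (gt n) = Tq &
      forall f' : Gam n -> HQ, is_hom f' -> f' (gx n) = Xq n -> f' (gy n) = Yq n ->
        f' (gt n) = Tq -> forall g, f' g = f g].

Lemma Fex n : exists f, @Fspec n f.
Proof.
case on: (odd n).
  case: (proj2 (hpres n on) HQ (Xq n) (Yq n) Tq (relsHQ on)) => f hf.
  by exists f.
by exists (fun _ => gone) => h; rewrite on in h.
Qed.

Definition F n : Gam n -> HQ := proj1_sig (constructive_indefinite_description _ (Fex n)).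
Arguments F : clear implicits.
Lemma F_spec n : @Fspec n (F n).
Proof. exact: (proj2_sig (constructive_indefinite_description _ (Fex n))). Qed.

Lemma F_hom n : odd n -> is_hom (F n).
Proof. by move=> on; case: (F_spec on). Qed.

Lemma F_compat m n : odd m -> odd n -> (m %| n)%N -> forall g, F n (phi m n g) = F m g.
Proof.
move=> om on mn g.
case: (hphi m n om on mn) => ph pt px py.
case: (F_spec on) => hn fx fy ft _.
case: (F_spec om) => _ _ _ _ U.
have m0 : m%:R != 0 :> rat by rewrite pnatr_eq0; apply/negP => /eqP e; rewrite e in om.
have n0 : n%:R != 0 :> rat by rewrite pnatr_eq0; apply/negP => /eqP e; rewrite e in on.
have en : (n%:R = (n %/ m)%:R * m%:R :> rat) by rewrite -natrM divnK.
apply: (U (fun g => F n (phi m n g))).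
- exact: hom_comp ph hn.
- rewrite px; change (F n (gpowz (gx n) (n %/ m)%N) = Xq m).
  rewrite (hom_powz hn) fx /Xq /mkQ powX; congr mk.
  rewrite natz_rat en; field; apply/andP; split=> //.
  by move: n0; rewrite en mulf_eq0 negb_or => /andP [].
- rewrite py; change (F n (gpowz (gy n) (n %/ m)%N) = Yq m).
  rewrite (hom_powz hn) fy /Yq /mkQ powY; congr mk.
  rewrite natz_rat en; field; apply/andP; split=> //.
  by move: n0; rewrite en mulf_eq0 negb_or => /andP [].
- by rewrite pt ft.
Qed.

Definition Hc : C -> HQ :=
  proj1_sig (constructive_indefinite_description _
    (proj2 (proj2 hcol) HQ F F_hom F_compat)).

Lemma Hc_spec : is_hom Hc /\ forall n, odd n -> forall g, Hc (iota n g) = F n g.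
Proof.
case: (proj2_sig (constructive_indefinite_description _
    (proj2 (proj2 hcol) HQ F F_hom F_compat))) => h1 h2 _.
by split.
Qed.


Local Notation zz n := (comm (gx n) (gy n)).

Lemma n0r n : odd n -> n%:R != 0 :> rat.
Proof. by move=> on; rewrite pnatr_eq0; apply/negP => /eqP e; rewrite e in on. Qed.

Lemma F_z n j : odd n ->
  F n (gpowz (zz n) j) = mkQ 0 0 (j%:~R * (1 / n%:R * (1 / n%:R))) 0.
Proof.
move=> on; case: (F_spec on) => hf fx fy _ _.
by rewrite (hom_powz hf) (hom_comm hf) fx fy /Xq /Yq /mkQ commXY powZ.
Qed.

Lemma F_sG n a b c e : odd n ->
  F n (sG (gx n) (gy n) (gt n) a b c e) =
  mkQ (a%:~R * (1 / n%:R)) (b%:~R * (1 / n%:R)) (c%:~R * (1 / n%:R * (1 / n%:R))) e.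
Proof.
move=> on; case: (F_spec on) => hf fx fy ft _.
rewrite /sG !hf !(hom_powz hf) (hom_comm hf) fx fy ft /Xq /Yq /Tq /mkQ commXY.
by rewrite powX powY powZ powT prodXYZT.
Qed.

Lemma HF n g : odd n -> Hc (iota n g) = F n g.
Proof. by move=> on; case: Hc_spec => _ h; apply: h. Qed.

Lemma Hh : is_hom Hc.
Proof. by case: Hc_spec. Qed.

Lemma P2_bwd n j : odd n -> lcs_omega C (iota n (gpowz (zz n) j)).
Proof.
move=> on; apply: hom_lcs_omega; first exact: iota_hom.
by apply/(p1_omega on (hpres n on)); exists j.
Qed.

Lemma P2_fwd c : lcs_omega C c -> exists n j, odd n /\ c = iota n (gpowz (zz n) j).
Proof.
move=> hcm; case: (surj c) => n [g [on Eg]].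
have pres := hpres n on.
have [a [b [cc [e eg]]]] : exists a b cc e, g = sG (gx n) (gy n) (gt n) a b cc e.
  by exists (ha (p1f pres g)), (Aux.hb (p1f pres g)), (hc (p1f pres g)), (he (p1f pres g));
    exact: p1_normal pres g.
have Hv : Hc c = mkQ (a%:~R * (1 / n%:R)) (b%:~R * (1 / n%:R))
                     (cc%:~R * (1 / n%:R * (1 / n%:R))) e.
  by rewrite Eg HF // eg F_sG.
have key : forall m, (0 < m)%N ->
    e = 0 /\ (exists k, a = 2 ^+ m * k) /\ (exists k, b = 2 ^+ m * k).
  move=> m m0; case: (lcs_union (hcm m)) => n' [w [on' lw ew]].
  case: (p1_lcs (hpres n' on') m0 lw) => a' [b' [c' [ka [kb [Ew Ea Eb]]]]].
  have Hv' := Hv; rewrite ew HF // Ew F_sG // in Hv'.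
  have ea := congr1 (@ha _ _) Hv'; have eb := congr1 (@Aux.hb _ _) Hv';
  have ee := congr1 (@he _ _) Hv'; simpl in ea, eb, ee.
  split; first by rewrite -ee.
  by split; [apply: (div2m on on' (esym ea) Ea) | apply: (div2m on on' (esym eb) Eb)].
have pw : forall (u : int), (forall m, (0 < m)%N -> exists k, u = 2 ^+ m * k) -> u = 0.
  move=> u hu; apply: pow2_zero => m; case: m => [|m]; first by exists u; rewrite expr0 mul1r.
  exact: hu.
have a0 : a = 0 by apply: pw => m m0; case: (key m m0) => _ [].
have b0 : b = 0 by apply: pw => m m0; case: (key m m0) => _ [].
have e0 : e = 0 by case: (key 1%N isT).
exists n, cc; split=> //; by rewrite Eg eg a0 b0 e0 sG_z.
Qed.

Lemma P2_omega c : lcs_omega C c <-> exists n j, odd n /\ c = iota n (gpowz (zz n) j).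
Proof.
split; first exact: P2_fwd.
by move=> [n [j [on ->]]]; exact: P2_bwd.
Qed.

Lemma lift_z n j n' : odd n -> odd n' -> exists k,
  iota n (gpowz (zz n) j) = iota (n * n') (gpowz (zz (n * n')) k).
Proof.
move=> on on'; have o := oddM' on on'.
rewrite (@liftl n n' _ on on').
have : lcs_omega (Gam (n * n')) (phi n (n * n') (gpowz (zz n) j)).
  apply: hom_lcs_omega; first exact: phi_l.
  by apply/(p1_omega on (hpres n on)); exists j.
case/(p1_omega o (hpres _ o)) => k ->; by exists k.
Qed.

Lemma lift_z' n j n' : odd n -> odd n' -> exists k,
  iota n' (gpowz (zz n') j) = iota (n * n') (gpowz (zz (n * n')) k).
Proof.
move=> on on'; rewrite mulnC; exact: lift_z.
Qed.

Lemma P2_central g h : lcs_omega C g -> gmul g h = gmul h g.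
Proof.
case/P2_fwd => n [j [on ->]].
case: (surj h) => m [w [om ->]].
have o := oddM' on om.
case: (lift_z j on om) => k ->.
rewrite (liftr _ on om) -!(iota_hom o); congr iota.
exact: p1_central (hpres _ o) k _.
Qed.

Lemma P2_omega1 g : lcs_omega1 C g <-> g = gone.
Proof.
split; last first.
  move=> ->; by case: (gen_sub (fun g0 : C => exists a b, True /\ lcs_omega C b /\ g0 = comm a b)).
move=> hg; apply: (hg (fun g => g = gone)).
  split=> //; split; first by move=> a b -> ->; rewrite gmul1.
  by move=> a ->; rewrite ginv1.
move=> s [a [b [_ [hb ->]]]]; apply/comm1P.
symmetry; exact: P2_central.
Qed.


Definition theta (c : C) : rat := hc (Hc c).

Lemma Hz n j : odd n ->
  Hc (iota n (gpowz (zz n) j)) = mkQ 0 0 (j%:~R * (1 / n%:R * (1 / n%:R))) 0.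
Proof. by move=> on; rewrite HF // F_z. Qed.

Lemma H_omega c : lcs_omega C c -> Hc c = mkQ 0 0 (theta c) 0.
Proof.
case/P2_fwd => n [j [on ->]]; rewrite /theta Hz // /mkQ /=.
by rewrite mk_nc.
Qed.

Lemma theta_in c : lcs_omega C c -> in_Z2modZ (theta c).
Proof.
case/P2_fwd => n [j [on ->]]; rewrite /theta Hz //=.
set v := (j%:~R * (1 / n%:R * (1 / n%:R)) : rat).
split; first exact: fracQ_ge0.
split; first exact: fracQ_lt1.
have d1 := fracQ_den v.
have d2 : (denq v %| (n * n)%N%:Z)%Z.
  apply: (denq_dvd (j := j)).
    by rewrite -lt0n muln_gt0 andbb; exact: odd_pos.
  rewrite /v natz_rat natrM; field; exact: n0r.
have := dvdz_trans d1 d2; rewrite dvdzE /= => hd.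
exact: (dvdn_odd hd (oddM' on on)).
Qed.

Lemma theta_surj q : in_Z2modZ q -> exists g, lcs_omega C g /\ theta g = q.
Proof.
move=> [q0 [q1 qd]].
set d := `|denq q|%N.
exists (iota d (gpowz (zz d) (numq q * d%:Z))); split; first exact: P2_bwd.
rewrite /theta Hz //= -[RHS](fracQ_id q0 q1); congr fracQ.
have ed : d%:R = (denq q)%:~R :> rat by rewrite -natz_rat /d absz_denq.
rewrite intrM natz_rat ed -[in RHS](divq_num_den q).
field; by rewrite intr_eq0 denq_neq0.
Qed.

Lemma theta_inj g h : lcs_omega C g -> lcs_omega C h -> theta g = theta h -> g = h.
Proof.
case/P2_fwd => n [j [on ->]]; case/P2_fwd => n' [j' [on' ->]].
have o := oddM' on on'.
case: (lift_z j on on') => k ->; case: (lift_z' j' on on') => k' ->.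
rewrite /theta !Hz //= => E.
set N := (n * n')%N in o E *.
have N0 : ((N * N)%N%:Z) != 0 by rewrite -lt0n muln_gt0 andbb; exact: odd_pos.
have E' : fracQ (k%:~R / ((N * N)%N%:Z)%:~R) = fracQ (k'%:~R / ((N * N)%N%:Z)%:~R).
  move: E; rewrite !natz_rat natrM.
  have -> : k%:~R * (1 / N%:R * (1 / N%:R)) = k%:~R / (N%:R * N%:R) :> rat by field; exact: n0r.
  by have -> : k'%:~R * (1 / N%:R * (1 / N%:R)) = k'%:~R / (N%:R * N%:R) :> rat by field; exact: n0r.
case: (fracQ_eq N0 E') => r ->.
congr iota; rewrite gpowzD mulrC gpowzM.
have -> : gpowz (zz N) ((N * N)%N%:Z) = gone.
  by rewrite mulnn; exact: p1_zN (hpres N o).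
by rewrite gpowz_one gmul1r.
Qed.

Lemma theta_add g h : lcs_omega C g -> lcs_omega C h ->
  theta (gmul g h) = fracQ (theta g + theta h).
Proof.
move=> hg hh; rewrite {1}/theta Hh (H_omega hg) (H_omega hh) /mkQ gmulHG mk_mul /=.
congr fracQ; ring.
Qed.

Lemma theta_z n : odd n -> theta (iota n (zz n)) = fracQ (1 / (n ^ 2)%:R).
Proof.
move=> on; rewrite /theta -(gpowz1 (zz n)) Hz //=; congr fracQ.
rewrite natrX; field; exact: n0r.
Qed.

End Part2.

End Aux.
Import Aux.

Theorem lemma3p3 :
  (* Part 1: each Gamma_{2k-1} *)
  (forall (k : nat) (G : group) (x y t : G),
     (0 < k)%N -> presents_gamma (2 * k - 1) x y t ->
     let n := (2 * k - 1)%N in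
     let z := comm x y in
     [/\ (forall g : G, lcs_omega G g <-> exists j : int, g = gpowz z j),
         gpown z (n ^ 2) = gone,
         (forall j : nat, (0 < j < n ^ 2)%N -> gpown z j <> gone)
       & (forall g : G, lcs_omega1 G g <-> g = gone)]) /\
  (* Part 2: the colimit hat Gamma *)
  (forall (Gam : nat -> group) (gx gy gt : forall n, Gam n)
          (phi : forall m n, Gam m -> Gam n) (C : group) (iota : forall n, Gam n -> C),
     (forall n, odd n -> presents_gamma n (gx n) (gy n) (gt n)) ->
     (forall m n, odd m -> odd n -> (m %| n)%N ->
        [/\ is_hom (phi m n), phi m n (gt m) = gt n,
            phi m n (gx m) = gpown (gx n) (n %/ m) &
            phi m n (gy m) = gpown (gy n) (n %/ m)]) ->
     is_colimit phi iota ->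
     let zz := fun n => comm (gx n) (gy n) in
     [/\ (forall g : C, lcs_omega C g <->
            exists (n : nat) (j : int), odd n /\ g = iota n (gpowz (zz n) j)),
         (forall g h : C, lcs_omega C g -> gmul g h = gmul h g),
         (exists theta : C -> rat,
            [/\ forall g, lcs_omega C g -> in_Z2modZ (theta g),
                forall q, in_Z2modZ q -> exists g, lcs_omega C g /\ theta g = q,
                forall g h, lcs_omega C g -> lcs_omega C h -> theta g = theta h -> g = h,
                forall g h, lcs_omega C g -> lcs_omega C h ->
                  theta (gmul g h) = fracQ (theta g + theta h)%R
              & forall n, odd n -> theta (iota n (zz n)) = fracQ (1 / (n ^ 2)%:R)%R])
       & (forall g : C, lcs_omega1 C g <-> g = gone)]).
Proof.
split.
- move=> k G x y t k0 pres n z.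
  have on : odd (2 * k - 1)%N.
    have -> : (2 * k - 1 = (2 * (k - 1)).+1)%N by lia.
    by rewrite /= oddM.
  split.
  + move=> g; exact: (p1_omega on pres g).
  + exact: (p1_zN pres).
  + move=> j hj; exact: (p1_order on pres hj).
  + move=> g; exact: (p1_omega1 on pres g).
- move=> Gam gx gy gt phi C iota hpres hphi hcol zz.
  split.
  + move=> g; exact: (P2_omega hpres hphi hcol g).
  + move=> g h hg; exact: (P2_central hpres hphi hcol h hg).
  + exists (theta hpres hphi hcol); split.
    * move=> g hg; exact: (theta_in hpres hphi hcol hg).
    * move=> q hq; exact: (theta_surj hpres hphi hcol hq).
    * move=> g h hg hh E; exact: (theta_inj hg hh E).
    * move=> g h hg hh; exact: (theta_add hpres hphi hcol hg hh).
    * move=> n on; exact: (theta_z hpres hphi hcol on).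
  + move=> g; exact: (P2_omega1 hpres hphi hcol g).
Qed.
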